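(* Let $H=B(1,3,3)$ and $G=H^2$. Then $G$ is equitably $4$-choosable.
   Context: For $m,l_1,\ldots,l_m\in\mathbb{N}$ with $l_1\le\cdots\le l_m$, $B(l_1,\ldots,l_m)$ is the graph with vertex set $\{u\}\cup\{v_{i,j}: i\in[m], j\in[l_i]\}$ in which, for each $i\in[m]$, consecutive vertices in the sequence $u, v_{i,1},\ldots,v_{i,l_i}$ are adjacent (and there are no other edges). For a graph $H$, $H^2$ has vertex set $V(H)$ with two vertices adjacent iff their distance in $H$ is 1 or 2. A $k$-assignment $L$ assigns to each vertex a set of exactly $k$ colors; an equitable $L$-coloring of $G$ is a proper coloring $f$ with $f(v)\in L(v)$ such that no color is used more than $\lceil |V(G)|/k\rceil$ times; $G$ is equitably $k$-choosable if it has an equitable $L$-coloring for every $k$-assignment $L$. *)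

(* Defs.v *)
From mathcomp Require Import all_boot.
Set Implicit Arguments. Unset Strict Implicit. Unset Printing Implicit Defensive.

(* Vertices of B(l_1,...,l_m), with l = [:: l_1; ...; l_m]:
   None = u, Some (Tagged i j) = v_{i+1, j+1} (0-based indices i, j). *)
Definition Bvert (l : seq nat) : finType :=
  option {i : 'I_(size l) & 'I_(nth 0 l i)}.

Definition Bedge (l : seq nat) : rel (Bvert l) := fun x y =>
  match x, y with
  | None, None => false
  | None, Some q => val (tagged q) == 0
  | Some p, None => val (tagged p) == 0
  | Some p, Some q =>
      (tag p == tag q) &&
      (((val (tagged p)).+1 == val (tagged q)) ||
       ((val (tagged q)).+1 == val (tagged p)))
  end.

Definition sqgraph (V : finType) (e : rel V) : rel V := fun x y =>
  (x != y) && (e x y || [exists z, e x z && e z y]).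

Definition ceil_div (n k : nat) : nat := n %/ k + (n %% k != 0).

Definition k_assignment (V : finType) (C : eqType) (L : V -> seq C) (k : nat) :=
  forall v, uniq (L v) /\ size (L v) = k.

Definition equitable_L_coloring (V : finType) (e : rel V) (C : eqType)
    (L : V -> seq C) (k : nat) (f : V -> C) :=
  (forall x y, e x y -> f x != f y) /\
  (forall v, f v \in L v) /\
  (forall c : C, #|[set v | f v == c]| <= ceil_div #|V| k).

Definition equitably_k_choosable (V : finType) (e : rel V) (k : nat) :=
  forall (C : eqType) (L : V -> seq C),
    k_assignment L k -> exists f : V -> C, equitable_L_coloring e L k f.

(* Main.v *)
Require Import Defs.
From mathcomp Require Import all_boot.
Notation l3 := [:: 1; 3; 3].
Notation V := (Bvert l3).
Definition mk (i : 'I_3) (j : nat) (H : j < nth 0 l3 i) : V :=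
  Some (Tagged (fun i : 'I_(size l3) => 'I_(nth 0 l3 i)) (Ordinal H)).
Definition vs : seq V := [:: None; mk (@Ordinal 3 0 isT) 0 isT;
  mk (@Ordinal 3 1 isT) 0 isT; mk (@Ordinal 3 1 isT) 1 isT; mk (@Ordinal 3 1 isT) 2 isT;
  mk (@Ordinal 3 2 isT) 0 isT; mk (@Ordinal 3 2 isT) 1 isT; mk (@Ordinal 3 2 isT) 2 isT].
Definition decode (k : nat) : V := nth None vs k.
Definition code (v : V) : nat :=
  if v is Some p then
    (if val (tag p) == 0 then 1 else if val (tag p) == 1 then 2 + val (tagged p)
     else 5 + val (tagged p)) else 0.
Lemma codeK v : decode (code v) = v /\ code v < 8.
Proof.
case: v => [[[i Hi] [j Hj]]|] //.
case: i Hi Hj => [|[|[|i]]] Hi Hj //;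
  move: Hj; (have -> : Hi = isT by apply: eq_irrelevance) => Hj;
  case: j Hj => [|[|[|j]]] Hj //;
  by rewrite (eq_irrelevance Hj isT).
Qed.
Definition E8 : seq (nat * nat) :=
  [:: (0,1);(0,2);(0,5);(1,2);(1,5);(2,5);(0,3);(0,6);(2,3);(2,4);(3,4);(5,6);(5,7);(6,7)].
Definition Gedge a b := ((a,b) \in E8) || ((b,a) \in E8).
Definition sqn a b := (a != b) && (Bedge (decode a) (decode b) ||
  has (fun c => Bedge (decode a) (decode c) && Bedge (decode c) (decode b)) (iota 0 8)).
Lemma tableN : all (fun a => all (fun b => sqn a b ==> Gedge a b) (iota 0 8)) (iota 0 8).
Proof. by vm_compute. Qed.
Lemma sq_code x y : sqgraph (@Bedge l3) x y -> Gedge (code x) (code y).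
Proof.
have [Dx Cx] := codeK x; have [Dy Cy] := codeK y.
case/andP => nxy H.
have := tableN => /allP /(_ (code x)); rewrite mem_iota Cx => /(_ isT) /allP /(_ (code y)).
rewrite mem_iota Cy => /(_ isT) /implyP; apply; apply/andP; split.
  by apply: contra nxy => /eqP E; rewrite -Dx -Dy E.
case/orP: H => [H|/existsP [z /andP [H1 H2]]]; first by rewrite Dx Dy H.
have [Dz Cz] := codeK z.
apply/orP; right; apply/hasP; exists (code z); first by rewrite mem_iota.
by rewrite Dx Dy Dz H1 H2.
Qed.
Lemma pick4 (C : eqType) (s F : seq C) : uniq s -> size s = 4 -> size F <= 3 ->
  exists2 x, x \in s & x \notin F.
Proof.
move=> us ss sF; apply/hasP; apply/negPn/negP => /hasPn H.
have: size s <= size F by apply: uniq_leq_size => // x /H; rewrite negbK.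
by rewrite ss; apply/negP; rewrite -ltnNge; apply: leq_ltn_trans sF _.
Qed.
Lemma sum8 (C : eqType) (c : C) (g : nat -> C) :
  #|[set k : 'I_8 | g k == c]| = \sum_(k < 8) (if g k == c then 1 else 0).
Proof.
rewrite cardsE -sum1_card big_mkcond /=; apply: eq_bigr => k _.
by rewrite -topredE.
Qed.
Set Implicit Arguments. Unset Strict Implicit.
Lemma count8 (C : eqType) (c cu ca cb1 cb2 cb3 cc1 cc2 cc3 : C) :
 cu != ca -> cu != cb1 -> cu != cc1 -> ca != cb1 -> ca != cc1 -> cb1 != cc1 ->
 cu != cb2 -> cu != cc2 -> cb1 != cb2 -> cb1 != cb3 -> cb2 != cb3 ->
 cc1 != cc2 -> cc1 != cc3 -> cc2 != cc3 -> cb3 != cc3 ->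
 ~~ [&& ca == cb2 & cb2 == cc2] -> ~~ [&& ca == cb2 & cb2 == cc3] ->
 ~~ [&& ca == cb3 & cb3 == cc2] ->
 \sum_(k < 8) (if nth cu [:: cu; ca; cb1; cb2; cb3; cc1; cc2; cc3] k == c then 1 else 0) <= 2.
Proof.
move=> h1 h2 h3 h4 h5 h6 h7 h8 h9 h10 h11 h12 h13 h14 h15 h16 h17 h18.
rewrite !big_ord_recr big_ord0 /=.
do 8 (case: eqP => ?); try done; subst;
 rewrite ?eqxx /= in h1 h2 h3 h4 h5 h6 h7 h8 h9 h10 h11 h12 h13 h14 h15 h16 h17 h18; done.
Qed.
Lemma cardV : 8 <= #|V|.
Proof.
have U : uniq vs.
  apply: (@map_uniq _ _ code); by vm_compute.
have := card_uniqP U; rewrite /= => <-; apply: max_card.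
Qed.
Lemma final (C : eqType) (L : V -> seq C) (cu ca cb1 cb2 cb3 cc1 cc2 cc3 : C) :
 cu \in L (decode 0) -> ca \in L (decode 1) -> cb1 \in L (decode 2) -> cb2 \in L (decode 3) ->
 cb3 \in L (decode 4) -> cc1 \in L (decode 5) -> cc2 \in L (decode 6) -> cc3 \in L (decode 7) ->
 cu != ca -> cu != cb1 -> cu != cc1 -> ca != cb1 -> ca != cc1 -> cb1 != cc1 ->
 cu != cb2 -> cu != cc2 -> cb1 != cb2 -> cb1 != cb3 -> cb2 != cb3 ->
 cc1 != cc2 -> cc1 != cc3 -> cc2 != cc3 -> cb3 != cc3 ->
 ~~ [&& ca == cb2 & cb2 == cc2] -> ~~ [&& ca == cb2 & cb2 == cc3] ->
 ~~ [&& ca == cb3 & cb3 == cc2] ->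
 exists f, equitable_L_coloring (sqgraph (@Bedge l3)) L 4 f.
Proof.
move=> m0 m1 m2 m3 m4 m5 m6 m7 h1 h2 h3 h4 h5 h6 h7 h8 h9 h10 h11 h12 h13 h14 h15 h16 h17 h18.
pose s := [:: cu; ca; cb1; cb2; cb3; cc1; cc2; cc3].
pose col k := nth cu s k.
exists (fun v => col (code v)); split; [|split].
- move=> x y /sq_code.
  have hE : all (fun p => (col p.1 != col p.2) && (col p.2 != col p.1)) E8.
    by rewrite /=; do ?[apply/andP; split]; by rewrite // eq_sym.
  by case/orP => /(allP hE) /andP[].
- move=> v; have [Dv Cv] := codeK v.
  rewrite -[v in L v]Dv; move: (code v) Cv => k.
  by case: k => [|[|[|[|[|[|[|[|k]]]]]]]].
- move=> c.
  have H2 : 2 <= ceil_div #|V| 4.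
    rewrite /ceil_div; apply: leq_trans (leq_addr _ _).
    exact: (@leq_div2r 4 8 _ cardV).
  apply: leq_trans H2.
  pose co (v : V) : 'I_8 := inord (code v).
  have coi : injective co.
    move=> x y E0; have := congr1 (@nat_of_ord 8) E0; rewrite /co !inordK ?(codeK x).2 ?(codeK y).2 // => E.
    by rewrite -(codeK x).1 -(codeK y).1 E.
  rewrite -(card_imset _ coi).
  apply: (@leq_trans (\sum_(k<8) (if col k == c then 1 else 0))); last first.
    have K := (count8 c h1 h2 h3 h4 h5 h6 h7 h8 h9 h10 h11 h12 h13 h14 h15 h16 h17 h18). rewrite /col /s. exact K.
  rewrite -sum8; apply: subset_leq_card; apply/subsetP => k /imsetP [v].
  rewrite !inE => Hv ->; rewrite /co inordK ?(codeK v).2 //.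
Qed.
Theorem lemma2p7 :
  equitably_k_choosable (sqgraph (@Bedge [:: 1; 3; 3])) 4.
Proof.
move=> C L hL.
have P v F : size F <= 3 -> exists2 x, x \in L v & x \notin F.
  by move=> hF; apply: pick4 (hL v).1 (hL v).2 hF.
have [cu m0 _] := P (decode 0) [::] isT.
have [ca m1 n1] := P (decode 1) [:: cu] isT.
have [cb1 m2 n2] := P (decode 2) [:: cu; ca] isT.
have [cc1 m5 n5] := P (decode 5) [:: cu; ca; cb1] isT.
have [cb2 m3 n3] := P (decode 3) [:: cu; cb1] isT.
have [cc2 m6 n6] := P (decode 6) [:: cu; cc1; if cb2 == ca then ca else cu] isT.
case: (boolP (cb2 == ca)) => e.
- have [cc3 m7 n7] := P (decode 7) [:: cc1; cc2; ca] isT.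
  have [cb3 m4 n4] := P (decode 4) [:: cb1; cb2; cc3] isT.
  move/eqP: e => e; subst cb2.
  apply: (final m0 m1 m2 m3 m4 m5 m6 m7);
  (first [apply/eqP => E | apply/negP => /andP[/eqP E /eqP E']]); subst;
  rewrite ?inE ?eqxx /= ?orbT in n1 n2 n3 n4 n5 n6 n7; done.
- have [cb3 m4 n4] := P (decode 4) [:: cb1; cb2; if ca == cc2 then ca else cb1] isT.
  have [cc3 m7 n7] := P (decode 7) [:: cc1; cc2; cb3] isT.
  apply: (final m0 m1 m2 m3 m4 m5 m6 m7);
  (first [apply/eqP => E | apply/negP => /andP[/eqP E /eqP E']]); subst;
  rewrite ?inE ?eqxx /= ?orbT in e n1 n2 n3 n4 n5 n6 n7; done.
Qed.
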